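(* Let $R$ be a commutative u-ring and let $n\ge 1$ be an integer. Then every $n$-absorbing ideal of $R$ is strongly $n$-absorbing.
   Context: All rings are commutative with identity $1\neq 0$. An ideal $I$ of $R$ is $n$-absorbing if whenever $x_1,\dots,x_{n+1}\in R$ and $x_1x_2\cdots x_{n+1}\in I$, the product of some $n$ of the $x_i$'s lies in $I$. An ideal $I$ of $R$ is strongly $n$-absorbing if whenever $I_1,\dots,I_{n+1}$ are ideals of $R$ with $I_1I_2\cdots I_{n+1}\subseteq I$, the product of some $n$ of the $I_j$'s is contained in $I$. An ideal $I$ of $R$ is a u-ideal if whenever $I\subseteq I_1\cup\cdots\cup I_m$ for finitely many ideals $I_1,\dots,I_m$ of $R$, then $I\subseteq I_j$ for some $j$. A ring $R$ is a u-ring if every ideal of $R$ is a u-ideal. *)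

(* Defs.v *)
From mathcomp Require Import all_boot all_order all_algebra.
Set Implicit Arguments. Unset Strict Implicit. Unset Printing Implicit Defensive.
Import GRing.Theory.
Local Open Scope ring_scope.

Definition subsetR (R : Type) (A B : R -> Prop) := forall x, A x -> B x.

Definition is_ideal (R : comNzRingType) (I : R -> Prop) : Prop :=
  [/\ I 0, (forall x y, I x -> I y -> I (x + y))
    & (forall r x, I x -> I (r * x))].

Definition gen_ideal (R : comNzRingType) (S : R -> Prop) : R -> Prop :=
  fun x => forall J, is_ideal J -> subsetR S J -> J x.

Definition ideal_prod (R : comNzRingType) (m : nat) (I : 'I_m -> R -> Prop)
  : R -> Prop :=
  gen_ideal (fun y => exists x : 'I_m -> R,
                 (forall j, I j (x j)) /\ y = \prod_(j < m) x j).

Definition n_absorbing (R : comNzRingType) (n : nat) (I : R -> Prop) : Prop :=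
  is_ideal I /\
  forall x : 'I_n.+1 -> R, I (\prod_(j < n.+1) x j) ->
    exists i : 'I_n.+1, I (\prod_(j < n.+1 | j != i) x j).

Definition strongly_n_absorbing (R : comNzRingType) (n : nat) (I : R -> Prop)
  : Prop :=
  is_ideal I /\
  forall Is : 'I_n.+1 -> R -> Prop, (forall j, is_ideal (Is j)) ->
    subsetR (ideal_prod Is) I ->
    exists i : 'I_n.+1, subsetR (ideal_prod (fun k : 'I_n => Is (lift i k))) I.

Definition u_ideal (R : comNzRingType) (I : R -> Prop) : Prop :=
  forall (m : nat) (J : 'I_m -> R -> Prop), (forall j, is_ideal (J j)) ->
    subsetR I (fun x => exists j, J j x) -> exists j, subsetR I (J j).

Definition u_ring (R : comNzRingType) : Prop :=
  forall I : R -> Prop, is_ideal I -> u_ideal I.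

(* Main.v *)
Require Import Defs.
From mathcomp Require Import all_boot all_order all_algebra.
From Stdlib Require Import Classical ClassicalEpsilon FunctionalExtensionality.
Set Implicit Arguments. Unset Strict Implicit. Unset Printing Implicit Defensive.
Import GRing.Theory.
Local Open Scope ring_scope.

Section Aux.
Variable R : comNzRingType.
Variable I : R -> Prop.

Definition Pr m (S : 'I_m -> R -> Prop) :=
  forall a : 'I_m -> R, (forall j, S j (a j)) -> I (\prod_(j < m) a j).

Definition upd m (S : 'I_m -> R -> Prop) (p0 : 'I_m) (z : R) : 'I_m -> R -> Prop :=
  fun j => if j == p0 then (fun w => w = z) else S j.

Lemma Pr_sub m (S : 'I_m -> R -> Prop) : is_ideal I -> Pr S -> subsetR (ideal_prod S) I.
Proof. move=> HI HP x Hx; apply: Hx => // y [a [Ha ->]]; exact: HP. Qed.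

Lemma sub_Pr m (S : 'I_m -> R -> Prop) : subsetR (ideal_prod S) I -> Pr S.
Proof. move=> H a Ha; apply: H => J HJ HS; apply: HS; by exists a. Qed.

Lemma Pr_mono m (S S' : 'I_m -> R -> Prop) :
  (forall p w, S p w -> S' p w) -> Pr S' -> Pr S.
Proof. move=> H HP a Ha; apply: HP => j; exact: H. Qed.

Lemma prod_split m (p0 : 'I_m) (a : 'I_m -> R) :
  \prod_(j < m) a j = a p0 * \prod_(j < m | j != p0) a j.
Proof. by rewrite (bigD1 p0). Qed.

Lemma upd_ideal m (S : 'I_m -> R -> Prop) (p0 : 'I_m) :
  is_ideal I -> is_ideal (fun z => Pr (upd S p0 z)).
Proof.
case=> [I0 ID IM].
have rest : forall (a : 'I_m -> R) z,
   \prod_(j < m | j != p0) (fun j => if j == p0 then z else a j) j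
   = \prod_(j < m | j != p0) a j.
  by move=> a z; apply: eq_bigr => j /negbTE ->.
have Hupd : forall a z, (forall j, upd S p0 z j (a j)) -> a p0 = z.
  by move=> a z /(_ p0); rewrite /upd eqxx.
have Hupd2 : forall a z z', (forall j, upd S p0 z j (a j)) ->
   forall j, upd S p0 z' j ((fun j => if j == p0 then z' else a j) j).
  move=> a z z' Ha j /=; move: (Ha j); rewrite /upd; by case: (j == p0).
split.
- move=> a Ha; rewrite (prod_split p0) (Hupd _ _ Ha) mul0r; exact: I0.
- move=> x y Hx Hy a Ha.
  have := Hx _ (Hupd2 _ _ _ Ha); have := Hy _ (Hupd2 _ _ _ Ha).
  rewrite !(prod_split p0) !rest (Hupd _ _ Ha) !eqxx mulrDl => H1 H2.
  exact: ID.
- move=> r x Hx a Ha.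
  have := Hx _ (Hupd2 _ _ _ Ha).
  rewrite !(prod_split p0) !rest (Hupd _ _ Ha) !eqxx -mulrA => H; exact: IM.
Qed.

Lemma prod_lift n (i : 'I_n.+1) (x : 'I_n.+1 -> R) :
  \prod_(j < n.+1 | j != i) x j = \prod_(k < n) x (lift i k).
Proof.
rewrite big_mkcond (bigD1_ord i) //= eqxx mul1r.
by apply: eq_bigr => k _; rewrite eq_sym (negbTE (neq_lift i k)).
Qed.

End Aux.

Theorem theorem2 (R : comNzRingType) (n : nat) (hn : (0 < n)%N) (hu : u_ring R)
  (I : R -> Prop) : n_absorbing n I -> strongly_n_absorbing n I.
Proof.
case=> HI Habs; split => //.
have claim : forall k : nat, forall T : 'I_n.+1 -> R -> Prop,
   (forall j : 'I_n.+1, (k <= j)%N -> exists x, forall w, T j w <-> w = x) ->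
   (forall j : 'I_n.+1, (j < k)%N -> is_ideal (T j)) ->
   Pr I T -> exists i, Pr I (fun p => T (lift i p)).
  elim=> [|k IH] T Hs Hid HP.
  - pose x j := proj1_sig (constructive_indefinite_description _ (Hs j isT)).
    have Hx : forall j w, T j w <-> w = x j.
      move=> j; exact: (proj2_sig (constructive_indefinite_description _ (Hs j isT))).
    have [i Hi] := Habs x (HP x (fun j => proj2 (Hx j (x j)) erefl)).
    exists i => a Ha.
    rewrite (eq_bigr (fun p => x (lift i p))); first by rewrite -prod_lift.
    by move=> p _; apply/(Hx _ _).1/Ha.
  - case: (ltnP k n.+1) => hk; last first.
      apply: IH => //.
        by move=> j hj; move: (ltn_ord j); rewrite ltnNge (leq_trans hk hj).
      by move=> j hj; apply: Hid; rewrite ltnS ltnW.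
    pose kk := Ordinal hk.
    have IHy : forall y, T kk y -> exists i, Pr I (fun p => upd T kk y (lift i p)).
      move=> y Hy; apply: IH.
      + move=> j hj; rewrite /upd; case: eqP => [_|/eqP ne]; first by exists y.
        apply: Hs; rewrite ltn_neqAle hj andbT; apply/eqP => e; move: ne; apply/negP; rewrite negbK.
        by apply/eqP/val_inj; rewrite /= e.
      + move=> j hj; rewrite /upd; case: eqP => [e|_].
          by move: hj; rewrite e /= ltnn.
        by apply: Hid; rewrite ltnS ltnW.
      + apply: Pr_mono HP => p w; rewrite /upd; case: eqP => [-> ->|] //.
    case: (classic (exists y, T kk y /\ Pr I (fun p => upd T kk y (lift kk p))))
      => [[y [Hy Hk]]|Hno].
      exists kk; apply: Pr_mono Hk => p w; rewrite /upd eq_sym (negbTE (neq_lift kk p)).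
      done.
    pose J (q : 'I_n) := fun z => Pr I (fun p => upd T kk z (lift (lift kk q) p)).
    have HJ : forall q, is_ideal (J q).
      move=> q; case: (unliftP (lift kk q) kk) => [p0 E|E]; last first.
        by move: (neq_lift kk q); rewrite -E eqxx.
      have -> : J q = fun z => Pr I (upd (fun p => T (lift (lift kk q) p)) p0 z).
        apply: functional_extensionality => z; rewrite /J.
        congr (Pr I _); apply: functional_extensionality => p.
        by rewrite /upd [X in _ == X]E (inj_eq (@lift_inj _ _)).
      exact: upd_ideal.
    have Hcov : subsetR (T kk) (fun z => exists q, J q z).
      move=> y Hy; have [i Hi] := IHy y Hy; case: (unliftP kk i) => [q E|E].
        by exists q; rewrite /J -E.
      by move: Hi; rewrite E => Hi; exfalso; apply: Hno; exists y.
    have [q Hq] := hu _ (Hid kk (ltnSn k)) n J HJ Hcov.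
    exists (lift kk q) => a Ha.
    case: (unliftP (lift kk q) kk) => [p0 E|E]; last first.
      by move: (neq_lift kk q); rewrite -E eqxx.
    have Hp0 : T kk (a p0) by move: (Ha p0); rewrite -E.
    apply: (Hq _ Hp0) => p; rewrite /upd; case: eqP => [e|_]; last exact: Ha.
    by move: e; rewrite [X in _ = X]E => /lift_inj ->.
move=> Is HIs Hsub.
have [i Hi] := claim n.+1 Is (fun j hj => ltac:(by rewrite leqNgt ltn_ord in hj))
  (fun j _ => HIs j) (sub_Pr Hsub).
exists i; exact: Pr_sub HI Hi.
Qed.
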